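(* Let $G$ be a differentiable groupoid object in a tangent category $\mathcal C$. For every differentiable right $G$-bundle $E$ the square $$\begin{array}{ccc}V_2E&\xrightarrow{\lambda'_{2,E}}&V^{[2]}E\\ \downarrow{\scriptstyle\pi'_E\circ\mathrm{pr}_1}&&\downarrow{\scriptstyle\pi'^{[1]}_E}\\ E&\xrightarrow{0'_E}&VE\end{array}$$ commutes and is a pullback in the category of right $G$-bundles and $G$-equivariant bundle morphisms (and in $\mathcal C$).
   Context: Tangent category (Rosický, with negatives): a category $\mathcal C$ with an endofunctor $T$ and natural transformations $\pi:T\Rightarrow\mathrm{id}$, $0:\mathrm{id}\Rightarrow T$, $+:T_2\Rightarrow T$, $\lambda:T\Rightarrow T^2$, $\tau:T^2\Rightarrow T^2$ satisfying Rosický's axioms ($T_kX$ = $k$-fold fiber product of $\pi_X$, existing and preserved by $T$; $(\pi_X,0_X,+_X)$ abelian group object in $\mathcal C/X$; additive symmetric structure $\tau$ with $\pi T\circ\tau=T\pi$; additive $\lambda$ with $\pi T\circ\lambda=0\circ\pi$, $\lambda T\circ\lambda=T\lambda\circ\lambda$, $\tau\circ\lambda=\lambda$, $T\tau\circ\tau T\circ T\lambda=\lambda T\circ\tau$; the square $(\lambda,(\pi T,T\pi),\pi,(0,0))$ a pointwise pullback). $\lambda_{2,X}=\tau_X\circ+_{TX}\circ(T0_X\times_{0_X}\lambda_X)$; it is a fact that the square $\lambda_2:T_2\to T^2$, $T\pi:T^2\to T$, $\pi\circ\mathrm{pr}_1:T_2\to\mathrm{id}$, $0:\mathrm{id}\to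 T$ is a pointwise pullback. $0^{[n]}_X=T^{n-1}0_X\circ\cdots\circ0_X$, $0_{(m),X}=(0_X,\dots,0_X)$. Groupoid object $G$ and differentiability: $G=(G_0,G_1,s,t,1,i,m)$ with iterated fiber products $G_k$; $t_k=t\circ\mathrm{pr}_1$, $t_0=\mathrm{id}$; for all $n\ge1,m\ge2,k\ge0$ the pullbacks $T^nG_1\times^{T^ns,T^nt_k}_{T^nG_0}T^nG_k$, $T^nG_1\times^{T^ns,0^{[n]}_{G_0}\circ t_k}_{T^nG_0}G_k$, $T_mG_1\times^{T_ms,0_{(m),G_0}\circ t_k}_{T_mG_0}G_k$, $G_0\times^{1,\pi_{G_1}\circ\mathrm{pr}_1}_{G_1}(TG_1\times^{Ts,0_{G_0}}_{TG_0}G_0)$ exist and $T^n(G_1\times^{s,t_k}_{G_0}G_k)\to T^nG_1\times_{T^nG_0}T^nG_k$ is an iso. Right $G$-bundles $r:E\to G_0$ (unital associative action $\beta_E$ with $r\circ\beta_E=s\circ\mathrm{pr}_2$), equivariant morphisms, and differentiable bundles (pullbacks $T^nE\times^{T^nr,T^nt_k}T^nG_k$, $T^nE\times^{T^nr,0^{[n]}_{G_0}\circ t_k}G_k$, $T_mE\times^{T_mr,0_{(m),G_0}\circ t_k}G_k$ exist and $T^n(E\times_{G_0}G_k)\cong T^nE\times_{T^nG_0}T^nG_k$ canonically). $V^{[n]}E=T^nE\times^{T^nr,0^{[n]}_{G_0}}_{T^nG_0}G_0$ with monomorphism $i_{V^{[n]}E}$ to $T^nE$ and the right $G$-action induced from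 $T^n\beta_E$; $VE=V^{[1]}E$; $V_2E=VE\times_EVE$ (over $\pi'_E$) with diagonal action and monomorphism $i_{V_2E}:V_2E\to T_2E$. $\pi'_E=\pi_E\circ i_{VE}$; $0'_E:E\to VE$ the unique map with $i_{VE}\circ0'_E=0_E$; $\lambda'_{2,E}:V_2E\to V^{[2]}E$ the unique map with $i_{V^{[2]}E}\circ\lambda'_{2,E}=\lambda_{2,E}\circ i_{V_2E}$; $\pi'^{[1]}_E:V^{[2]}E\to VE$ the unique map with $i_{VE}\circ\pi'^{[1]}_E=T\pi_E\circ i_{V^{[2]}E}$ (the first vertical prolongation of $\pi'$). All of these are $G$-equivariant bundle morphisms. *)

(* Defs.v *)
From Stdlib Require Import PeanoNat.

Set Implicit Arguments.
Unset Strict Implicit.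

Record Cat := {
  Ob :> Type;
  Hom : Ob -> Ob -> Type;
  idm : forall X : Ob, Hom X X;
  comp : forall X Y Z : Ob, Hom Y Z -> Hom X Y -> Hom X Z;
  comp_id_l : forall X Y (f : Hom X Y), comp (idm Y) f = f;
  comp_id_r : forall X Y (f : Hom X Y), comp f (idm X) = f;
  comp_assoc : forall X Y Z W (h : Hom Z W) (g : Hom Y Z) (f : Hom X Y),
      comp h (comp g f) = comp (comp h g) f }.

Arguments Hom {c} _ _.
Arguments idm {c} X.
Arguments comp {c X Y Z} _ _.

Notation "g ∘ f" := (comp g f) (at level 40, left associativity).

Record Functor (C : Cat) := {
  fobj :> Ob C -> Ob C;
  fmap : forall X Y : Ob C, Hom X Y -> Hom (fobj X) (fobj Y);
  fmap_id : forall X, fmap (idm X) = idm (fobj X);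
  fmap_comp : forall X Y Z (g : Hom Y Z) (f : Hom X Y),
      fmap (g ∘ f) = fmap g ∘ fmap f }.

Arguments fmap {C} f {X Y} _ : rename.

Section Basics.
Context {C : Cat}.

Definition is_pullback {A B Z P : C} (f : Hom A Z) (g : Hom B Z)
    (p : Hom P A) (q : Hom P B) : Prop :=
  f ∘ p = g ∘ q /\
  forall (X : C) (a : Hom X A) (b : Hom X B), f ∘ a = g ∘ b ->
    exists! h : Hom X P, p ∘ h = a /\ q ∘ h = b.

Definition has_pullback {A B Z : C} (f : Hom A Z) (g : Hom B Z) : Prop :=
  exists (P : C) (p : Hom P A) (q : Hom P B), is_pullback f g p q.

Definition is_wide_pullback {Y Z P : C} (k : nat) (f : Hom Y Z)
    (pr : nat -> Hom P Y) : Prop :=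
  (forall i j, (i < k)%nat -> (j < k)%nat -> f ∘ pr i = f ∘ pr j) /\
  forall (X : C) (a : nat -> Hom X Y),
    (forall i j, (i < k)%nat -> (j < k)%nat -> f ∘ a i = f ∘ a j) ->
    exists! h : Hom X P, forall i, (i < k)%nat -> pr i ∘ h = a i.

Fixpoint Tn (F : Functor C) (n : nat) (X : C) : C :=
  match n with 0 => X | S m => Tn F m (F X) end.

Fixpoint Tn_map (F : Functor C) (n : nat) {X Y : C} (f : Hom X Y)
  : Hom (Tn F n X) (Tn F n Y) :=
  match n with 0 => f | S m => Tn_map F m (fmap F f) end.

End Basics.

Record TangentData (C : Cat) := {
  tT : Functor C;
  tpi : forall X : C, Hom (tT X) X;
  tzero : forall X : C, Hom X (tT X);
  tTm : nat -> C -> C;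
  tpr : forall (k : nat) (X : C), nat -> Hom (tTm k X) (tT X);
  tplus : forall X : C, Hom (tTm 2 X) (tT X);
  tneg : forall X : C, Hom (tT X) (tT X);
  tlam : forall X : C, Hom (tT X) (tT (tT X));
  ttau : forall X : C, Hom (tT (tT X)) (tT (tT X)) }.

Arguments tT {C} t.
Arguments tpi {C} t X.
Arguments tzero {C} t X.
Arguments tTm {C} t k X.
Arguments tpr {C} t k X i.
Arguments tplus {C} t X.
Arguments tneg {C} t X.
Arguments tlam {C} t X.
Arguments ttau {C} t X.

Section Tangent.
Context {C : Cat} (t : TangentData C).
Local Notation T := (tT t).
Local Notation T1 f := (fmap (tT t) f).
Local Notation π := (tpi t).
Local Notation z0 := (tzero t).
Local Notation Tm := (tTm t).
Local Notation pr := (tpr t).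
Local Notation pl := (tplus t).
Local Notation ng := (tneg t).
Local Notation λ := (tlam t).
Local Notation τ := (ttau t).

Definition tangent_axioms : Prop :=
  (forall X Y (f : Hom X Y), f ∘ π X = π Y ∘ T1 f) /\
  (forall X Y (f : Hom X Y), T1 f ∘ z0 X = z0 Y ∘ f) /\
  (forall X Y (f : Hom X Y) (h : Hom (Tm 2 X) (Tm 2 Y)),
      pr 2 Y 0 ∘ h = T1 f ∘ pr 2 X 0 -> pr 2 Y 1 ∘ h = T1 f ∘ pr 2 X 1 ->
      pl Y ∘ h = T1 f ∘ pl X) /\
  (forall X Y (f : Hom X Y), T1 f ∘ ng X = ng Y ∘ T1 f) /\
  (forall X Y (f : Hom X Y), T1 (T1 f) ∘ λ X = λ Y ∘ T1 f) /\
  (forall X Y (f : Hom X Y), T1 (T1 f) ∘ τ X = τ Y ∘ T1 (T1 f)) /\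
  (forall k X, (1 <= k)%nat -> is_wide_pullback k (π X) (pr k X)) /\
  (forall k X, (1 <= k)%nat ->
      is_wide_pullback k (T1 (π X)) (fun i => T1 (pr k X i))) /\
  (* (pi_X, 0_X, +_X, -_X) is an abelian group object in C/X *)
  (forall X, π X ∘ z0 X = idm X) /\
  (forall X, π X ∘ pl X = π X ∘ pr 2 X 0) /\
  (forall X, π X ∘ ng X = π X) /\
  (forall X (h : Hom (T X) (Tm 2 X)),
      pr 2 X 0 ∘ h = z0 X ∘ π X -> pr 2 X 1 ∘ h = idm (T X) -> pl X ∘ h = idm (T X)) /\
  (forall X (h : Hom (Tm 2 X) (Tm 2 X)),
      pr 2 X 0 ∘ h = pr 2 X 1 -> pr 2 X 1 ∘ h = pr 2 X 0 -> pl X ∘ h = pl X) /\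
  (forall X (a b c d : Hom (Tm 3 X) (Tm 2 X)),
      pr 2 X 0 ∘ a = pr 3 X 0 -> pr 2 X 1 ∘ a = pr 3 X 1 ->
      pr 2 X 0 ∘ b = pl X ∘ a -> pr 2 X 1 ∘ b = pr 3 X 2 ->
      pr 2 X 0 ∘ c = pr 3 X 1 -> pr 2 X 1 ∘ c = pr 3 X 2 ->
      pr 2 X 0 ∘ d = pr 3 X 0 -> pr 2 X 1 ∘ d = pl X ∘ c ->
      pl X ∘ b = pl X ∘ d) /\
  (forall X (h : Hom (T X) (Tm 2 X)),
      pr 2 X 0 ∘ h = idm (T X) -> pr 2 X 1 ∘ h = ng X -> pl X ∘ h = z0 X ∘ π X) /\
  (forall X, π (T X) ∘ τ X = T1 (π X)) /\
  (forall X, τ X ∘ τ X = idm (T (T X))) /\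
  (forall X, T1 (τ X) ∘ τ (T X) ∘ T1 (τ X) = τ (T X) ∘ T1 (τ X) ∘ τ (T X)) /\
  (* tau additive: (T^2X, T pi, T0, T+) -> (T^2X, pi T, 0 T, + T) *)
  (forall X, τ X ∘ T1 (z0 X) = z0 (T X)) /\
  (forall X (h : Hom (T (Tm 2 X)) (Tm 2 (T X))),
      pr 2 (T X) 0 ∘ h = τ X ∘ T1 (pr 2 X 0) ->
      pr 2 (T X) 1 ∘ h = τ X ∘ T1 (pr 2 X 1) ->
      pl (T X) ∘ h = τ X ∘ T1 (pl X)) /\
  (* lift lambda: additive into (T pi, T0, T+) and into (pi T, 0 T, + T) *)
  (forall X, T1 (π X) ∘ λ X = z0 X ∘ π X) /\
  (forall X, π (T X) ∘ λ X = z0 X ∘ π X) /\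
  (forall X, λ X ∘ z0 X = T1 (z0 X) ∘ z0 X) /\
  (forall X, λ X ∘ z0 X = z0 (T X) ∘ z0 X) /\
  (forall X (h : Hom (Tm 2 X) (T (Tm 2 X))),
      T1 (pr 2 X 0) ∘ h = λ X ∘ pr 2 X 0 -> T1 (pr 2 X 1) ∘ h = λ X ∘ pr 2 X 1 ->
      λ X ∘ pl X = T1 (pl X) ∘ h) /\
  (forall X (h : Hom (Tm 2 X) (Tm 2 (T X))),
      pr 2 (T X) 0 ∘ h = λ X ∘ pr 2 X 0 -> pr 2 (T X) 1 ∘ h = λ X ∘ pr 2 X 1 ->
      λ X ∘ pl X = pl (T X) ∘ h) /\
  (forall X, λ (T X) ∘ λ X = T1 (λ X) ∘ λ X) /\
  (forall X, τ X ∘ λ X = λ X) /\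
  (forall X, T1 (τ X) ∘ τ (T X) ∘ T1 (λ X) = λ (T X) ∘ τ X) /\
  (forall X (pp : Hom (T (T X)) (Tm 2 X)) (zz : Hom X (Tm 2 X)),
      pr 2 X 0 ∘ pp = π (T X) -> pr 2 X 1 ∘ pp = T1 (π X) ->
      pr 2 X 0 ∘ zz = z0 X -> pr 2 X 1 ∘ zz = z0 X ->
      is_pullback pp zz (λ X) (π X)).

Fixpoint zn (n : nat) (X : C) : Hom X (Tn T n X) :=
  match n with
  | 0 => idm X
  | S m => Tn_map T m (z0 X) ∘ zn m X
  end.

(* lambda_{2,X} = tau_X o +_{TX} o (T0_X x_{0_X} lambda_X) : T_2 X -> T^2 X,
   characterized through any witness h of the pairing map. *)
Definition is_lambda2 (X : C) (l2 : Hom (Tm 2 X) (T (T X))) : Prop :=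
  forall h : Hom (Tm 2 X) (Tm 2 (T X)),
    pr 2 (T X) 0 ∘ h = T1 (z0 X) ∘ pr 2 X 0 ->
    pr 2 (T X) 1 ∘ h = λ X ∘ pr 2 X 1 ->
    l2 = τ X ∘ pl (T X) ∘ h.

End Tangent.

(* Gs k is the object G_k of composable k-tuples; G_0 := Gs 0 is the object
   of objects, tk k = t_k : G_k -> G_0 (t_0 = id, t_{k+1} = t o pr_1) and
   G_{k+1} = G_1 x^{s,t_k}_{G_0} G_k with projections gp1 k, gp2 k. *)
Record GroupoidData (C : Cat) := {
  Gs : nat -> C;
  G1 : C;
  gs : Hom G1 (Gs 0);
  gt : Hom G1 (Gs 0);
  gu : Hom (Gs 0) G1;
  gi : Hom G1 G1;
  gm : Hom (Gs 2) G1;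
  tk : forall k, Hom (Gs k) (Gs 0);
  gp1 : forall k, Hom (Gs (S k)) G1;
  gp2 : forall k, Hom (Gs (S k)) (Gs k) }.

Arguments Gs {C} g k.
Arguments G1 {C} g.
Arguments gs {C} g.
Arguments gt {C} g.
Arguments gu {C} g.
Arguments gi {C} g.
Arguments gm {C} g.
Arguments tk {C} g k.
Arguments gp1 {C} g k.
Arguments gp2 {C} g k.

Section Groupoid.
Context {C : Cat} (G : GroupoidData C).
Local Notation G0 := (Gs G 0).

Definition g21 : Hom (Gs G 2) (G1 G) := gp1 G 1.
Definition g22 : Hom (Gs G 2) (G1 G) := gp1 G 0 ∘ gp2 G 1.

Definition groupoid_axioms : Prop :=
  tk G 0 = idm G0 /\
  (forall k, tk G (S k) = gt G ∘ gp1 G k) /\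
  (forall k, is_pullback (gs G) (tk G k) (gp1 G k) (gp2 G k)) /\
  gs G ∘ gu G = idm G0 /\ gt G ∘ gu G = idm G0 /\
  gs G ∘ gm G = gs G ∘ g22 /\ gt G ∘ gm G = gt G ∘ g21 /\
  (forall x y z : Hom (Gs G 3) (Gs G 2),
      g21 ∘ x = gp1 G 2 -> g22 ∘ x = gp1 G 1 ∘ gp2 G 2 ->
      g21 ∘ y = gm G ∘ x -> g22 ∘ y = gp1 G 0 ∘ gp2 G 1 ∘ gp2 G 2 ->
      g21 ∘ z = gp1 G 2 -> g22 ∘ z = gm G ∘ gp2 G 2 ->
      gm G ∘ y = gm G ∘ z) /\
  (forall h : Hom (G1 G) (Gs G 2),
      g21 ∘ h = gu G ∘ gt G -> g22 ∘ h = idm (G1 G) -> gm G ∘ h = idm (G1 G)) /\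
  (forall h : Hom (G1 G) (Gs G 2),
      g21 ∘ h = idm (G1 G) -> g22 ∘ h = gu G ∘ gs G -> gm G ∘ h = idm (G1 G)) /\
  gs G ∘ gi G = gt G /\ gt G ∘ gi G = gs G /\
  (forall h : Hom (G1 G) (Gs G 2),
      g21 ∘ h = idm (G1 G) -> g22 ∘ h = gi G -> gm G ∘ h = gu G ∘ gt G) /\
  (forall h : Hom (G1 G) (Gs G 2),
      g21 ∘ h = gi G -> g22 ∘ h = idm (G1 G) -> gm G ∘ h = gu G ∘ gs G).

Section Diff.
Context (t : TangentData C).
Local Notation T := (tT t).
Local Notation T1 f := (fmap (tT t) f).

Definition differentiable_groupoid : Prop :=
  (forall n k, (1 <= n)%nat ->
      has_pullback (Tn_map T n (gs G)) (Tn_map T n (tk G k))) /\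
  (forall n k, (1 <= n)%nat ->
      has_pullback (Tn_map T n (gs G)) (zn t n G0 ∘ tk G k)) /\
  (forall m k (u : Hom (tTm t m (G1 G)) (tTm t m G0)) (z : Hom G0 (tTm t m G0)),
      (2 <= m)%nat ->
      (forall i, (i < m)%nat -> tpr t m G0 i ∘ u = T1 (gs G) ∘ tpr t m (G1 G) i) ->
      (forall i, (i < m)%nat -> tpr t m G0 i ∘ z = tzero t G0) ->
      has_pullback u (z ∘ tk G k)) /\
  (forall (Q : C) (q1 : Hom Q (T (G1 G))) (q2 : Hom Q G0),
      is_pullback (T1 (gs G)) (tzero t G0) q1 q2 ->
      has_pullback (gu G) (tpi t (G1 G) ∘ q1)) /\
  (forall n k, (1 <= n)%nat ->
      is_pullback (Tn_map T n (gs G)) (Tn_map T n (tk G k))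
                  (Tn_map T n (gp1 G k)) (Tn_map T n (gp2 G k))).
End Diff.

(* Action data: r : E -> G_0, the object bA = E x^{r,t}_{G_0} G_1 with its
   projections, and the action map bact : E x_{G_0} G_1 -> E. *)
Record ActData := {
  bE : C;
  br : Hom bE G0;
  bA : C;
  baE : Hom bA bE;
  baG : Hom bA (G1 G);
  bact : Hom bA bE }.

Definition act_pullback (X : ActData) : Prop :=
  is_pullback (br X) (gt G) (baE X) (baG X).

(* a right G-bundle: action data together with E x^{r,t_2}_{G_0} G_2 *)
Record Bundle := {
  bd :> ActData;
  bA2 : C;
  ba2E : Hom bA2 (bE bd);
  ba2G : Hom bA2 (Gs G 2) }.

Definition bundle_axioms (E : Bundle) : Prop :=
  act_pullback E /\
  is_pullback (br E) (tk G 2) (ba2E E) (ba2G E) /\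
  br E ∘ bact E = gs G ∘ baG E /\
  (forall h : Hom (bE E) (bA E),
      baE E ∘ h = idm (bE E) -> baG E ∘ h = gu G ∘ br E -> bact E ∘ h = idm (bE E)) /\
  (forall x y z : Hom (bA2 E) (bA E),
      baE E ∘ x = ba2E E -> baG E ∘ x = g21 ∘ ba2G E ->
      baE E ∘ y = bact E ∘ x -> baG E ∘ y = g22 ∘ ba2G E ->
      baE E ∘ z = ba2E E -> baG E ∘ z = gm G ∘ ba2G E ->
      bact E ∘ y = bact E ∘ z).

Definition equivariant (X Y : ActData) (f : Hom (bE X) (bE Y)) : Prop :=
  br Y ∘ f = br X /\
  forall h : Hom (bA X) (bA Y),
    baE Y ∘ h = f ∘ baE X -> baG Y ∘ h = baG X ->
    f ∘ bact X = bact Y ∘ h.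

Section DiffBundle.
Context (t : TangentData C).
Local Notation T := (tT t).
Local Notation T1 f := (fmap (tT t) f).

Definition differentiable_bundle (E : Bundle) : Prop :=
  (forall k, has_pullback (br E) (tk G k)) /\
  (forall n k, (1 <= n)%nat ->
      has_pullback (Tn_map T n (br E)) (Tn_map T n (tk G k))) /\
  (forall n k, (1 <= n)%nat ->
      has_pullback (Tn_map T n (br E)) (zn t n G0 ∘ tk G k)) /\
  (forall m k (u : Hom (tTm t m (bE E)) (tTm t m G0)) (z : Hom G0 (tTm t m G0)),
      (2 <= m)%nat ->
      (forall i, (i < m)%nat -> tpr t m G0 i ∘ u = T1 (br E) ∘ tpr t m (bE E) i) ->
      (forall i, (i < m)%nat -> tpr t m G0 i ∘ z = tzero t G0) ->
      has_pullback u (z ∘ tk G k)) /\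
  (forall n k (P : C) (p : Hom P (bE E)) (q : Hom P (Gs G k)), (1 <= n)%nat ->
      is_pullback (br E) (tk G k) p q ->
      is_pullback (Tn_map T n (br E)) (Tn_map T n (tk G k))
                  (Tn_map T n p) (Tn_map T n q)).

(* V^[n]E = T^nE x^{T^n r, 0^[n]}_{T^n G_0} G_0 with monomorphism i : V^[n]E -> T^nE
   and bundle map the G_0-projection; its right G-action (on
   V^[n]E x^{r,t}_{G_0} G_1) is the one induced from T^n beta_E. *)
Definition is_vertical_bundle (n : nat) (E : ActData) (V : ActData)
    (i : Hom (bE V) (Tn T n (bE E))) : Prop :=
  is_pullback (Tn_map T n (br E)) (zn t n G0) i (br V) /\
  act_pullback V /\
  (forall φ : Hom (bA V) (Tn T n (bA E)),
      Tn_map T n (baE E) ∘ φ = i ∘ baE V ->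
      Tn_map T n (baG E) ∘ φ = zn t n (G1 G) ∘ baG V ->
      i ∘ bact V = Tn_map T n (bact E) ∘ φ).

End DiffBundle.
End Groupoid.

Arguments ActData {C} G.
Arguments Bundle {C} G.
Arguments is_vertical_bundle {C G} t n E V i.
Arguments differentiable_bundle {C G} t E.
Arguments differentiable_groupoid {C} G t.
Arguments equivariant {C G} X Y f.
Arguments bundle_axioms {C G} E.
Arguments act_pullback {C G} X.
Arguments is_lambda2 {C} t X l2.

(* Main.v *)
Require Import Defs.
From Stdlib Require Import ClassicalEpsilon PeanoNat Lia.

Section Gen.
Context {C : Cat}.

Lemma post {X Y Z : C} (f : Hom Y Z) (g : Hom X Y) (h : Hom X Z) :
  f ∘ g = h -> forall W (k : Hom W X), f ∘ (g ∘ k) = h ∘ k.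
Proof. intros H W k. rewrite comp_assoc, H. reflexivity. Qed.

Lemma pb_comm {A B Z P : C} (f : Hom A Z) (g : Hom B Z) p q :
  is_pullback f g p q -> forall X (y : Hom X P), f ∘ (p ∘ y) = g ∘ (q ∘ y).
Proof. intros [Hc _] X y. rewrite !comp_assoc, Hc. reflexivity. Qed.

Lemma pb_uniq {A B Z P : C} (f : Hom A Z) (g : Hom B Z) p q :
  is_pullback f g p q -> forall X (y1 y2 : Hom X P),
  p ∘ y1 = p ∘ y2 -> q ∘ y1 = q ∘ y2 -> y1 = y2.
Proof.
  intros Hp X y1 y2 H1 H2. destruct Hp as [Hc Hu].
  destruct (Hu X (p ∘ y1) (q ∘ y1)) as [h [_ Hh]].
  { rewrite !comp_assoc, Hc. reflexivity. }
  assert (e1 := Hh y1 (conj eq_refl eq_refl)).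
  assert (e2 := Hh y2 (conj (eq_sym H1) (eq_sym H2))). congruence.
Qed.

Lemma pb_ex {A B Z P : C} (f : Hom A Z) (g : Hom B Z) p q :
  is_pullback f g p q -> forall X (a : Hom X A) (b : Hom X B),
  f ∘ a = g ∘ b -> exists h : Hom X P, p ∘ h = a /\ q ∘ h = b.
Proof.
  intros [Hc Hu] X a b H. destruct (Hu X a b H) as [h [Hh _]]. eauto.
Qed.

Lemma wp_ex {Y Z P : C} k (f : Hom Y Z) (pr : nat -> Hom P Y) :
  is_wide_pullback k f pr -> forall X (a : nat -> Hom X Y),
  (forall i j, (i < k)%nat -> (j < k)%nat -> f ∘ a i = f ∘ a j) ->
  exists h, forall i, (i < k)%nat -> pr i ∘ h = a i.
Proof. intros [_ Hu] X a H. destruct (Hu X a H) as [h [Hh _]]. eauto. Qed.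

Lemma wp_uniq {Y Z P : C} k (f : Hom Y Z) (pr : nat -> Hom P Y) :
  is_wide_pullback k f pr -> forall X (y1 y2 : Hom X P),
  (forall i, (i < k)%nat -> pr i ∘ y1 = pr i ∘ y2) -> y1 = y2.
Proof.
  intros Hw X y1 y2 H. destruct Hw as [Hc Hu].
  destruct (Hu X (fun i => pr i ∘ y1)) as [h [_ Hh]].
  { intros i j Hi Hj. rewrite !comp_assoc, (Hc i j Hi Hj). reflexivity. }
  assert (e1 := Hh y1 (fun i _ => eq_refl)).
  assert (e2 := Hh y2 (fun i Hi => eq_sym (H i Hi))). congruence.
Qed.

Lemma wp_comm {Y Z P : C} k (f : Hom Y Z) (pr : nat -> Hom P Y) :
  is_wide_pullback k f pr -> forall i j, (i < k)%nat -> (j < k)%nat ->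
  forall X (y : Hom X P), f ∘ (pr i ∘ y) = f ∘ (pr j ∘ y).
Proof. intros [Hc _] i j Hi Hj X y. rewrite !comp_assoc, (Hc i j Hi Hj). reflexivity. Qed.

End Gen.
Arguments wp_ex {C Y Z P k f pr}.
Arguments wp_uniq {C Y Z P k f pr}.
Arguments wp_comm {C Y Z P k f pr}.
Arguments pb_ex {C A B Z P f g p q}.
Arguments pb_uniq {C A B Z P f g p q}.
Arguments pb_comm {C A B Z P f g p q}.
Arguments post {C X Y Z f g h}.

From Stdlib Require Import ClassicalEpsilon PeanoNat Lia.

Set Implicit Arguments.
Unset Strict Implicit.
Ltac rassoc := repeat rewrite <- comp_assoc.

Section Tan.
Context {C : Cat} (t : TangentData C) (Ht : tangent_axioms t).
Local Notation T := (tT t).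
Local Notation T1 f := (fmap (tT t) f).
Local Notation π := (tpi t).
Local Notation z0 := (tzero t).
Local Notation pl := (tplus t).
Local Notation ng := (tneg t).
Local Notation λ := (tlam t).
Local Notation τ := (ttau t).
Local Notation p0 X := (tpr t 2 X 0).
Local Notation p1 X := (tpr t 2 X 1).

Ltac decomp := let H := fresh "H" in pose proof Ht as H; unfold tangent_axioms in H;
  repeat match type of H with _ /\ _ => let H' := fresh "A" in destruct H as [H' H] end.

Lemma ax_nat_pi : forall X Y (f : Hom X Y), f ∘ π X = π Y ∘ T1 f.
Proof. decomp; assumption. Qed.
Lemma ax_nat_z0 : forall X Y (f : Hom X Y), T1 f ∘ z0 X = z0 Y ∘ f.
Proof. decomp; assumption. Qed.
Lemma ax_nat_pl : forall X Y (f : Hom X Y) (h : Hom (tTm t 2 X) (tTm t 2 Y)),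
      p0 Y ∘ h = T1 f ∘ p0 X -> p1 Y ∘ h = T1 f ∘ p1 X ->
      pl Y ∘ h = T1 f ∘ pl X.
Proof. decomp; assumption. Qed.
Lemma ax_nat_ng : forall X Y (f : Hom X Y), T1 f ∘ ng X = ng Y ∘ T1 f.
Proof. decomp; assumption. Qed.
Lemma ax_nat_lam : forall X Y (f : Hom X Y), T1 (T1 f) ∘ λ X = λ Y ∘ T1 f.
Proof. decomp; assumption. Qed.
Lemma ax_nat_tau : forall X Y (f : Hom X Y), T1 (T1 f) ∘ τ X = τ Y ∘ T1 (T1 f).
Proof. decomp; assumption. Qed.
Lemma wpk : forall k X, (1 <= k)%nat -> is_wide_pullback k (π X) (tpr t k X).
Proof. decomp; assumption. Qed.
Arguments wpk : clear implicits.
Lemma ax_pi_z0 : forall X, π X ∘ z0 X = idm X.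
Proof. decomp; assumption. Qed.
Lemma ax_pi_pl : forall X, π X ∘ pl X = π X ∘ p0 X.
Proof. decomp; assumption. Qed.
Lemma ax_pi_ng : forall X, π X ∘ ng X = π X.
Proof. decomp; assumption. Qed.
Lemma ax_unit : forall X (h : Hom (T X) (tTm t 2 X)),
      p0 X ∘ h = z0 X ∘ π X -> p1 X ∘ h = idm (T X) -> pl X ∘ h = idm (T X).
Proof. decomp; assumption. Qed.
Lemma ax_comm : forall X (h : Hom (tTm t 2 X) (tTm t 2 X)),
      p0 X ∘ h = p1 X -> p1 X ∘ h = p0 X -> pl X ∘ h = pl X.
Proof. decomp; assumption. Qed.
Lemma ax_assoc : forall X (a b c d : Hom (tTm t 3 X) (tTm t 2 X)),
      p0 X ∘ a = tpr t 3 X 0 -> p1 X ∘ a = tpr t 3 X 1 ->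
      p0 X ∘ b = pl X ∘ a -> p1 X ∘ b = tpr t 3 X 2 ->
      p0 X ∘ c = tpr t 3 X 1 -> p1 X ∘ c = tpr t 3 X 2 ->
      p0 X ∘ d = tpr t 3 X 0 -> p1 X ∘ d = pl X ∘ c ->
      pl X ∘ b = pl X ∘ d.
Proof. decomp; assumption. Qed.
Lemma ax_inv : forall X (h : Hom (T X) (tTm t 2 X)),
      p0 X ∘ h = idm (T X) -> p1 X ∘ h = ng X -> pl X ∘ h = z0 X ∘ π X.
Proof. decomp; assumption. Qed.
Lemma ax_tau_pi : forall X, π (T X) ∘ τ X = T1 (π X).
Proof. decomp; assumption. Qed.
Lemma ax_tau_inv : forall X, τ X ∘ τ X = idm (T (T X)).
Proof. decomp; assumption. Qed.
Lemma ax_tau_z : forall X, τ X ∘ T1 (z0 X) = z0 (T X).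
Proof. decomp; assumption. Qed.
Lemma ax_lam_pi : forall X, π (T X) ∘ λ X = z0 X ∘ π X.
Proof. decomp; assumption. Qed.
Lemma ax_lam_Tpi : forall X, T1 (π X) ∘ λ X = z0 X ∘ π X.
Proof. decomp; assumption. Qed.
Lemma ax_lam_z1 : forall X, λ X ∘ z0 X = T1 (z0 X) ∘ z0 X.
Proof. decomp; assumption. Qed.
Lemma ax_lam_z2 : forall X, λ X ∘ z0 X = z0 (T X) ∘ z0 X.
Proof. decomp; assumption. Qed.
Lemma ax_univ : forall X (pp : Hom (T (T X)) (tTm t 2 X)) (zz : Hom X (tTm t 2 X)),
      p0 X ∘ pp = π (T X) -> p1 X ∘ pp = T1 (π X) ->
      p0 X ∘ zz = z0 X -> p1 X ∘ zz = z0 X ->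
      is_pullback pp zz (λ X) (π X).
Proof. decomp; assumption. Qed.

Lemma Tpi_tau X : T1 (π X) ∘ τ X = π (T X).
Proof. rewrite <- ax_tau_pi, <- comp_assoc, ax_tau_inv, comp_id_r. reflexivity. Qed.

Lemma pair2_ex X Y (a b : Hom Y (T X)) : π X ∘ a = π X ∘ b ->
  exists k, p0 X ∘ k = a /\ p1 X ∘ k = b.
Proof.
  intro H.
  destruct (wp_ex (wpk 2 X ltac:(lia)) Y (fun i => match i with 0 => a | _ => b end))
    as [k Hk].
  - intros [|[|i]] [|[|j]] Hi Hj; simpl;
      first [lia | reflexivity | exact H | exact (eq_sym H)].
  - exists k. split; [apply (Hk 0)|apply (Hk 1)]; lia.
Qed.

Lemma pair2_uniq X Y (k1 k2 : Hom Y (tTm t 2 X)) :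
  p0 X ∘ k1 = p0 X ∘ k2 -> p1 X ∘ k1 = p1 X ∘ k2 -> k1 = k2.
Proof.
  intros H0 H1. apply (wp_uniq (wpk 2 X ltac:(lia))).
  intros [|[|i]] Hi; first [lia | assumption].
Qed.

Lemma pr01 X Y (k : Hom Y (tTm t 2 X)) : π X ∘ (p0 X ∘ k) = π X ∘ (p1 X ∘ k).
Proof. apply (wp_comm (wpk 2 X ltac:(lia))); lia. Qed.

Definition addm {X Y} (a b : Hom Y (T X)) : Hom Y (T X) :=
  epsilon (inhabits a) (fun s => exists k, p0 X ∘ k = a /\ p1 X ∘ k = b /\ pl X ∘ k = s).

Lemma addm_spec X Y (a b : Hom Y (T X)) k :
  p0 X ∘ k = a -> p1 X ∘ k = b -> pl X ∘ k = addm a b.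
Proof.
  intros H0 H1. unfold addm.
  destruct (epsilon_spec (inhabits a)
     (fun s => exists k, p0 X ∘ k = a /\ p1 X ∘ k = b /\ pl X ∘ k = s)
     (ex_intro _ (pl X ∘ k) (ex_intro _ k (conj H0 (conj H1 eq_refl)))))
    as [k' [H0' [H1' H']]].
  rewrite <- H'. f_equal. apply pair2_uniq; congruence.
Qed.

Lemma addm_ex X Y (a b : Hom Y (T X)) : π X ∘ a = π X ∘ b ->
  exists k, p0 X ∘ k = a /\ p1 X ∘ k = b /\ pl X ∘ k = addm a b.
Proof.
  intro H. destruct (pair2_ex H) as [k [H0 H1]]. exists k.
  repeat split; auto. apply addm_spec; auto.
Qed.

Lemma addm_pi X Y (a b : Hom Y (T X)) : π X ∘ a = π X ∘ b ->
  π X ∘ addm a b = π X ∘ a.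
Proof.
  intro H. destruct (addm_ex H) as [k [H0 [H1 H2]]].
  rewrite <- H2, <- H0, !comp_assoc, ax_pi_pl. reflexivity.
Qed.

Lemma addm_comp X Y Z (a b : Hom Y (T X)) (g : Hom Z Y) : π X ∘ a = π X ∘ b ->
  addm a b ∘ g = addm (a ∘ g) (b ∘ g).
Proof.
  intro H. destruct (addm_ex H) as [k [H0 [H1 H2]]].
  rewrite <- H2. rewrite <- comp_assoc. apply addm_spec; rewrite comp_assoc; congruence.
Qed.

Lemma addm_comm X Y (a b : Hom Y (T X)) : π X ∘ a = π X ∘ b -> addm a b = addm b a.
Proof.
  intro H. destruct (addm_ex H) as [k [H0 [H1 H2]]].
  destruct (pair2_ex (X:=X) (Y:=tTm t 2 X) (a:=p1 X) (b:=p0 X)) as [s [S0 S1]].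
  { destruct (wpk 2 X ltac:(lia)) as [Hc _]. symmetry. apply Hc; lia. }
  rewrite <- H2, <- (ax_comm S0 S1), <- comp_assoc.
  apply addm_spec; rewrite comp_assoc; congruence.
Qed.

Lemma addm_0l X Y (a : Hom Y (T X)) : addm (z0 X ∘ (π X ∘ a)) a = a.
Proof.
  destruct (pair2_ex (X:=X) (Y:=T X) (a:=z0 X ∘ π X) (b:=idm (T X))) as [s [S0 S1]].
  { rewrite comp_assoc, ax_pi_z0, comp_id_l, comp_id_r. reflexivity. }
  rewrite <- (addm_spec (k := s ∘ a)).
  - rewrite comp_assoc, (ax_unit S0 S1), comp_id_l. reflexivity.
  - rewrite comp_assoc, S0, comp_assoc. reflexivity.
  - rewrite comp_assoc, S1, comp_id_l. reflexivity.
Qed.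

Lemma addm_0r X Y (a : Hom Y (T X)) : addm a (z0 X ∘ (π X ∘ a)) = a.
Proof.
  rewrite addm_comm. apply addm_0l.
  rewrite (comp_assoc (π X) (z0 X)), ax_pi_z0, comp_id_l. reflexivity.
Qed.

Lemma addm_inv X Y (a : Hom Y (T X)) : addm a (ng X ∘ a) = z0 X ∘ (π X ∘ a).
Proof.
  destruct (pair2_ex (X:=X) (Y:=T X) (a:=idm (T X)) (b:=ng X)) as [s [S0 S1]].
  { rewrite ax_pi_ng, comp_id_r. reflexivity. }
  rewrite <- (addm_spec (k := s ∘ a)).
  - rewrite comp_assoc, (ax_inv S0 S1), comp_assoc. reflexivity.
  - rewrite comp_assoc, S0, comp_id_l. reflexivity.
  - rewrite comp_assoc, S1. reflexivity.
Qed.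

Lemma ng_pi X Y (a : Hom Y (T X)) : π X ∘ (ng X ∘ a) = π X ∘ a.
Proof. rewrite comp_assoc, ax_pi_ng. reflexivity. Qed.

Lemma addm_assoc X Y (a b c : Hom Y (T X)) : π X ∘ a = π X ∘ b -> π X ∘ b = π X ∘ c ->
  addm (addm a b) c = addm a (addm b c).
Proof.
  intros Hab Hbc.
  pose proof (wpk 3 X ltac:(lia)) as W3.
  destruct (wp_ex W3 Y (fun i => match i with 0 => a | 1 => b | _ => c end)) as [k Hk].
  { intros [|[|[|i]]] [|[|[|j]]] Hi Hj; simpl; first [lia | congruence]. }
  assert (K0 := Hk 0 ltac:(lia)); assert (K1 := Hk 1 ltac:(lia)); assert (K2 := Hk 2 ltac:(lia)).
  simpl in K0, K1, K2.
  destruct W3 as [Hc3 _].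
  destruct (pair2_ex (X:=X) (a:=tpr t 3 X 0) (b:=tpr t 3 X 1)) as [A [A0 A1]].
  { apply Hc3; lia. }
  destruct (pair2_ex (X:=X) (a:=tpr t 3 X 1) (b:=tpr t 3 X 2)) as [Cc [C0 C1]].
  { apply Hc3; lia. }
  destruct (pair2_ex (X:=X) (a:=pl X ∘ A) (b:=tpr t 3 X 2)) as [B [B0 B1]].
  { rewrite comp_assoc, ax_pi_pl, <- comp_assoc, A0. apply Hc3; lia. }
  destruct (pair2_ex (X:=X) (a:=tpr t 3 X 0) (b:=pl X ∘ Cc)) as [D [D0 D1]].
  { rewrite (comp_assoc (π X) (pl X)), ax_pi_pl, <- comp_assoc, C0. apply Hc3; lia. }
  pose proof (ax_assoc A0 A1 B0 B1 C0 C1 D0 D1) as HA.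
  assert (EA : pl X ∘ (A ∘ k) = addm a b)
    by (apply addm_spec; rewrite comp_assoc; congruence).
  assert (EC : pl X ∘ (Cc ∘ k) = addm b c)
    by (apply addm_spec; rewrite comp_assoc; congruence).
  transitivity (pl X ∘ (B ∘ k)).
  - symmetry. apply addm_spec; rewrite comp_assoc.
    + rewrite B0, <- comp_assoc. exact EA.
    + rewrite B1. exact K2.
  - rewrite comp_assoc, HA, <- comp_assoc. apply addm_spec; rewrite comp_assoc.
    + rewrite D0. exact K0.
    + rewrite D1, <- comp_assoc. exact EC.
Qed.

Lemma addm_nat X X' (f : Hom X X') Y (a b : Hom Y (T X)) : π X ∘ a = π X ∘ b ->
  T1 f ∘ addm a b = addm (T1 f ∘ a) (T1 f ∘ b).
Proof.
  intro H. destruct (addm_ex H) as [k [H0 [H1 H2]]].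
  destruct (pair2_ex (X:=X') (a:=T1 f ∘ p0 X) (b:=T1 f ∘ p1 X)) as [h [Q0 Q1]].
  { rewrite !comp_assoc, <- !ax_nat_pi, <- !comp_assoc.
    f_equal.
    destruct (wpk 2 X ltac:(lia)) as [Hc _]. apply Hc; lia. }
  rewrite <- H2, comp_assoc, <- (ax_nat_pl Q0 Q1), <- comp_assoc.
  apply addm_spec; rewrite comp_assoc; [rewrite Q0|rewrite Q1]; rewrite <- comp_assoc; congruence.
Qed.

Lemma addm_cancel X Y (x y1 y2 : Hom Y (T X)) :
  π X ∘ x = π X ∘ y1 -> π X ∘ x = π X ∘ y2 -> addm x y1 = addm x y2 -> y1 = y2.
Proof.
  intros H1 H2 E.
  assert (G : forall y, π X ∘ x = π X ∘ y -> y = addm (ng X ∘ x) (addm x y)).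
  { intros y Hy. rewrite <- addm_assoc.
    - rewrite (addm_comm (a := ng X ∘ x)), addm_inv.
      + rewrite Hy. symmetry. apply addm_0l.
      + apply ng_pi.
    - rewrite ng_pi. reflexivity.
    - exact Hy. }
  rewrite (G y1 H1), (G y2 H2), E. reflexivity.
Qed.

Lemma lam_PB X : exists pp zz, is_pullback pp zz (λ X) (π X) /\
  p0 X ∘ pp = π (T X) /\ p1 X ∘ pp = T1 (π X) /\ p0 X ∘ zz = z0 X /\ p1 X ∘ zz = z0 X.
Proof.
  destruct (pair2_ex (X:=X) (Y:=T(T X)) (a:=π (T X)) (b:=T1 (π X))) as [pp [P0 P1]].
  { apply ax_nat_pi. }
  destruct (pair2_ex (X:=X) (Y:=X) (a:=z0 X) (b:=z0 X)) as [zz [Z0 Z1]].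
  { reflexivity. }
  exists pp, zz. split; [apply ax_univ; auto | auto].
Qed.

Lemma lam_pb X Y (w : Hom Y (T (T X))) (d : Hom Y X) :
  π (T X) ∘ w = z0 X ∘ d -> T1 (π X) ∘ w = z0 X ∘ d ->
  exists u, λ X ∘ u = w /\ π X ∘ u = d.
Proof.
  intros H1 H2. destruct (lam_PB X) as [pp [zz [PB [P0 [P1 [Z0 Z1]]]]]].
  destruct (pb_ex PB _ w d) as [u [U1 U2]].
  { apply pair2_uniq; rewrite !comp_assoc; [rewrite P0, Z0|rewrite P1, Z1]; assumption. }
  exists u; auto.
Qed.

Lemma lam_mono X Y (u1 u2 : Hom Y (T X)) :
  λ X ∘ u1 = λ X ∘ u2 -> π X ∘ u1 = π X ∘ u2 -> u1 = u2.
Proof.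
  intros H1 H2. destruct (lam_PB X) as [pp [zz [PB _]]].
  exact (pb_uniq PB _ u1 u2 H1 H2).
Qed.

Lemma lam2_h X : exists h : Hom (tTm t 2 X) (tTm t 2 (T X)),
  p0 (T X) ∘ h = T1 (z0 X) ∘ p0 X /\ p1 (T X) ∘ h = λ X ∘ p1 X.
Proof.
  apply pair2_ex.
  rewrite !comp_assoc, <- ax_nat_pi, ax_lam_pi, <- !comp_assoc. f_equal.
  destruct (wpk 2 X ltac:(lia)) as [Hc _]. apply Hc; lia.
Qed.

Lemma lam2_ex X : exists l, is_lambda2 t X l.
Proof.
  destruct (lam2_h X) as [h [H0 H1]].
  exists (τ X ∘ pl (T X) ∘ h). intros h' H0' H1'. f_equal.
  apply pair2_uniq; congruence.
Qed.

Lemma fib_h X Y (e : Hom Y (tTm t 2 X)) :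
  π (T X) ∘ (T1 (z0 X) ∘ (p0 X ∘ e)) = π (T X) ∘ (λ X ∘ (p1 X ∘ e)).
Proof.
  rewrite !comp_assoc, <- ax_nat_pi, ax_lam_pi, <- !comp_assoc, pr01. reflexivity.
Qed.

Lemma lam2_eq X l (Hl : is_lambda2 t X l) Y (e : Hom Y (tTm t 2 X)) :
  l ∘ e = τ X ∘ addm (T1 (z0 X) ∘ (p0 X ∘ e)) (λ X ∘ (p1 X ∘ e)).
Proof.
  destruct (lam2_h X) as [h [H0 H1]].
  rewrite (Hl h H0 H1). rassoc. f_equal.
  apply addm_spec; rewrite comp_assoc; [rewrite H0|rewrite H1]; rassoc; reflexivity.
Qed.

Lemma lam2_eq' X l (Hl : is_lambda2 t X l) Y (e : Hom Y (tTm t 2 X)) :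
  τ X ∘ (l ∘ e) = addm (T1 (z0 X) ∘ (p0 X ∘ e)) (λ X ∘ (p1 X ∘ e)).
Proof. rewrite (lam2_eq Hl), comp_assoc, ax_tau_inv, comp_id_l. reflexivity. Qed.

Lemma Tpi_Tz0 X Y (a : Hom Y (T X)) : T1 (π X) ∘ (T1 (z0 X) ∘ a) = a.
Proof. rewrite comp_assoc, <- fmap_comp, ax_pi_z0, fmap_id, comp_id_l. reflexivity. Qed.

Lemma lam2_p0 X l (Hl : is_lambda2 t X l) Y (e : Hom Y (tTm t 2 X)) :
  T1 (π X) ∘ (τ X ∘ (l ∘ e)) = p0 X ∘ e.
Proof.
  rewrite (lam2_eq' Hl), addm_nat by apply fib_h.
  rewrite Tpi_Tz0, comp_assoc, ax_lam_Tpi, <- comp_assoc, <- pr01.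
  apply addm_0r.
Qed.

Lemma Tpi_l2 X l (Hl : is_lambda2 t X l) Y (e : Hom Y (tTm t 2 X)) :
  T1 (π X) ∘ (l ∘ e) = z0 X ∘ (π X ∘ (p0 X ∘ e)).
Proof.
  rewrite (lam2_eq Hl), comp_assoc, Tpi_tau, addm_pi by apply fib_h.
  rewrite comp_assoc, <- ax_nat_pi, <- comp_assoc. reflexivity.
Qed.

Lemma lam2_uniq X l (Hl : is_lambda2 t X l) Y (e1 e2 : Hom Y (tTm t 2 X)) :
  l ∘ e1 = l ∘ e2 -> π X ∘ (p0 X ∘ e1) = π X ∘ (p0 X ∘ e2) -> e1 = e2.
Proof.
  intros E P.
  assert (V : p0 X ∘ e1 = p0 X ∘ e2).
  { rewrite <- (lam2_p0 Hl e1), <- (lam2_p0 Hl e2), E. reflexivity. }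
  assert (E' : τ X ∘ (l ∘ e1) = τ X ∘ (l ∘ e2)) by (rewrite E; reflexivity).
  rewrite !(lam2_eq' Hl), V in E'.
  apply addm_cancel in E'.
  - apply pair2_uniq; auto. apply lam_mono; auto.
    rewrite <- !pr01. exact P.
  - rewrite <- V. apply fib_h.
  - apply fib_h.
Qed.

Lemma lam2_pb X l (Hl : is_lambda2 t X l) Y (c : Hom Y (T (T X))) (d : Hom Y X) :
  T1 (π X) ∘ c = z0 X ∘ d -> exists e, l ∘ e = c /\ π X ∘ (p0 X ∘ e) = d.
Proof.
  intro H.
  remember (τ X ∘ c) as c' eqn:Ec.
  remember (π (T X) ∘ c) as v eqn:Ev.
  assert (Hv : T1 (π X) ∘ c' = v) by (subst; rewrite comp_assoc, Tpi_tau; reflexivity).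
  assert (Fc : π (T X) ∘ c' = z0 X ∘ d) by (subst; rewrite comp_assoc, ax_tau_pi; exact H).
  assert (Hvd : π X ∘ v = d).
  { subst v. rewrite comp_assoc, ax_nat_pi, <- comp_assoc, H, comp_assoc, ax_pi_z0, comp_id_l.
    reflexivity. }
  remember (T1 (z0 X) ∘ v) as tt eqn:Et.
  assert (Ft : π (T X) ∘ tt = z0 X ∘ d)
    by (subst tt; rewrite comp_assoc, <- ax_nat_pi, <- comp_assoc, Hvd; reflexivity).
  assert (Fn : π (T X) ∘ (ng (T X) ∘ tt) = z0 X ∘ d) by (rewrite ng_pi; exact Ft).
  remember (addm c' (ng (T X) ∘ tt)) as w eqn:Ew.
  assert (Fw : π (T X) ∘ w = z0 X ∘ d) by (subst w; rewrite addm_pi; congruence).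
  assert (Gw : T1 (π X) ∘ w = z0 X ∘ d).
  { subst w. rewrite addm_nat by congruence.
    rewrite comp_assoc, ax_nat_ng, <- comp_assoc, Et, Tpi_Tz0, Hv, addm_inv, Hvd.
    reflexivity. }
  destruct (lam_pb Fw Gw) as [u [U1 U2]].
  destruct (pair2_ex (X:=X) (a:=v) (b:=u)) as [e [E0 E1]]; [congruence|].
  exists e. split.
  - rewrite (lam2_eq Hl), E0, E1, U1, <- Et.
    assert (A : addm tt w = c').
    { subst w. rewrite <- addm_assoc by congruence.
      rewrite (addm_comm (a:=tt)) by congruence.
      rewrite addm_assoc by congruence.
      rewrite addm_inv, Ft, <- Fc. apply addm_0r. }
    rewrite A, Ec, comp_assoc, ax_tau_inv, comp_id_l. reflexivity.
  - rewrite E0. exact Hvd.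
Qed.

Lemma lam2_nat X X' (f : Hom X X') lX lX' (HX : is_lambda2 t X lX) (HX' : is_lambda2 t X' lX')
  Y (e : Hom Y (tTm t 2 X)) (e' : Hom Y (tTm t 2 X')) :
  p0 X' ∘ e' = T1 f ∘ (p0 X ∘ e) -> p1 X' ∘ e' = T1 f ∘ (p1 X ∘ e) ->
  T1 (T1 f) ∘ (lX ∘ e) = lX' ∘ e'.
Proof.
  intros H0 H1.
  rewrite (lam2_eq HX), (lam2_eq HX'), comp_assoc, ax_nat_tau, <- comp_assoc.
  rewrite addm_nat by apply fib_h.
  f_equal. f_equal.
  - rewrite comp_assoc, <- fmap_comp, ax_nat_z0, fmap_comp, <- comp_assoc, H0. reflexivity.
  - rewrite comp_assoc, ax_nat_lam, <- comp_assoc, H1. reflexivity.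
Qed.

Lemma lam2_zero X l (Hl : is_lambda2 t X l) Y (e : Hom Y (tTm t 2 X)) (x : Hom Y X) :
  p0 X ∘ e = z0 X ∘ x -> p1 X ∘ e = z0 X ∘ x -> l ∘ e = T1 (z0 X) ∘ (z0 X ∘ x).
Proof.
  intros H0 H1. rewrite (lam2_eq Hl), H0, H1.
  rewrite (comp_assoc (λ X)), ax_lam_z2, <- comp_assoc.
  replace (z0 (T X) ∘ (z0 X ∘ x)) with
    (z0 (T X) ∘ (π (T X) ∘ (T1 (z0 X) ∘ (z0 X ∘ x)))).
  2:{ f_equal. rewrite comp_assoc, <- ax_nat_pi, <- comp_assoc,
        (comp_assoc (π X)), ax_pi_z0, comp_id_l. reflexivity. }
  rewrite addm_0r, comp_assoc, ax_tau_z, comp_assoc, <- ax_lam_z2, ax_lam_z1,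
    <- comp_assoc. reflexivity.
Qed.

End Tan.

From Stdlib Require Import PeanoNat Lia.
Set Implicit Arguments.
Unset Strict Implicit.

Lemma Tn_map_id {C : Cat} (F : Functor C) n : forall X : C, Tn_map F n (idm X) = idm _.
Proof. induction n; intro X; simpl; [reflexivity|]. rewrite fmap_id. apply IHn. Qed.

Lemma Tn_map_comp {C : Cat} (F : Functor C) n : forall (X Y Z : C) (g : Hom Y Z) (f : Hom X Y),
  Tn_map F n (g ∘ f) = Tn_map F n g ∘ Tn_map F n f.
Proof. induction n; intros; simpl; [reflexivity|]. rewrite fmap_comp. apply IHn. Qed.

Lemma actT {C : Cat} (t : TangentData C) (G : GroupoidData C) (HG : groupoid_axioms G)
  (HGd : differentiable_groupoid G t) (E : Bundle G) (HE : bundle_axioms E)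
  (HEd : differentiable_bundle t E) n (Hn : (1 <= n)%nat) :
  (forall Y (α : Hom Y (Tn (tT t) n (bE E))) (β : Hom Y (Tn (tT t) n (G1 G))),
     Tn_map (tT t) n (br E) ∘ α = Tn_map (tT t) n (gt G) ∘ β ->
     exists φ, Tn_map (tT t) n (baE E) ∘ φ = α /\ Tn_map (tT t) n (baG E) ∘ φ = β) /\
  (forall Y (y1 y2 : Hom Y (Tn (tT t) n (bA E))),
     Tn_map (tT t) n (baE E) ∘ y1 = Tn_map (tT t) n (baE E) ∘ y2 ->
     Tn_map (tT t) n (baG E) ∘ y1 = Tn_map (tT t) n (baG E) ∘ y2 -> y1 = y2).
Proof.
  destruct HG as (Htk0 & Htk & Hgp & _).
  destruct HGd as (_ & _ & _ & _ & HGT).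
  destruct HEd as (_ & _ & _ & _ & HET).
  destruct HE as (HA & _).
  unfold act_pullback in HA.
  destruct (pb_ex (Hgp 0) _ (baG E) (gs G ∘ baG E)) as [q [Q1 Q2]].
  { rewrite Htk0, comp_id_l. reflexivity. }
  assert (PBq : is_pullback (br E) (tk G 1) (baE E) q).
  { split.
    - rewrite Htk, <- comp_assoc, Q1. apply HA.
    - intros X a b Hab. rewrite Htk, <- comp_assoc in Hab.
      destruct (pb_ex HA _ a (gp1 G 0 ∘ b) Hab) as [m [M1 M2]].
      exists m. split.
      + split; [exact M1|].
        apply (pb_uniq (Hgp 0)).
        * rewrite comp_assoc, Q1. exact M2.
        * rewrite comp_assoc, Q2, <- comp_assoc, M2, comp_assoc.
          destruct (Hgp 0) as [Hc _]. rewrite Hc, Htk0, comp_id_l. reflexivity.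
      + intros m' [M1' M2']. apply (pb_uniq HA); [congruence|].
        rewrite M2, <- Q1, <- comp_assoc, M2'. reflexivity. }
  pose proof (HET n 1 _ _ _ Hn PBq) as TPB.
  pose proof (HGT n 0 Hn) as TGs.
  assert (EG : Tn_map (tT t) n (baG E) = Tn_map (tT t) n (gp1 G 0) ∘ Tn_map (tT t) n q)
    by (rewrite <- Q1, Tn_map_comp; reflexivity).
  split.
  - intros Y α β H.
    destruct (pb_ex TGs _ β (Tn_map (tT t) n (gs G) ∘ β)) as [y [Y1 Y2]].
    { rewrite Htk0, Tn_map_id, comp_id_l. reflexivity. }
    destruct (pb_ex TPB _ α y) as [φ [P1 P2]].
    { rewrite H, Htk, Tn_map_comp, <- comp_assoc, Y1. reflexivity. }
    exists φ. split; [exact P1|]. rewrite EG, <- comp_assoc, P2. exact Y1.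
  - intros Y y1 y2 H1 H2. apply (pb_uniq TPB); [exact H1|].
    apply (pb_uniq TGs).
    + rewrite !comp_assoc, <- EG. exact H2.
    + rewrite !comp_assoc, <- Tn_map_comp, Q2, Tn_map_comp, <- !comp_assoc, H2. reflexivity.
Qed.
Unset Implicit Arguments.
Set Strict Implicit.
Theorem mainTheorem15
  (C : Cat) (t : TangentData C) (Ht : tangent_axioms t)
  (G : GroupoidData C) (HG : groupoid_axioms G)
  (HGd : differentiable_groupoid G t)
  (E : Bundle G) (HE : bundle_axioms E) (HEd : differentiable_bundle t E)
  (* VE = V^[1]E, with monomorphism iV : VE -> TE *)
  (VE : ActData G) (iV : Hom (bE VE) (tT t (bE E)))
  (HVE : is_vertical_bundle t 1 E VE iV)
  (* V^[2]E, with monomorphism i2 : V^[2]E -> T^2E *)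
  (V2E : ActData G) (i2 : Hom (bE V2E) (Tn (tT t) 2 (bE E)))
  (HV2E : is_vertical_bundle t 2 E V2E i2)
  (* V_2E = VE x_E VE over pi'_E = pi_E o iV, with the diagonal action *)
  (W : ActData G) (w1 w2 : Hom (bE W) (bE VE))
  (HW : is_pullback (tpi t (bE E) ∘ iV) (tpi t (bE E) ∘ iV) w1 w2)
  (HWr : br W = br VE ∘ w1) (HWa : act_pullback W)
  (HWact : forall u1 u2 : Hom (bA W) (bA VE),
      baE VE ∘ u1 = w1 ∘ baE W -> baG VE ∘ u1 = baG W ->
      baE VE ∘ u2 = w2 ∘ baE W -> baG VE ∘ u2 = baG W ->
      w1 ∘ bact W = bact VE ∘ u1 /\ w2 ∘ bact W = bact VE ∘ u2)
  (* i_{V_2E} : V_2E -> T_2E *)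
  (iW : Hom (bE W) (tTm t 2 (bE E)))
  (HiW1 : tpr t 2 (bE E) 0 ∘ iW = iV ∘ w1)
  (HiW2 : tpr t 2 (bE E) 1 ∘ iW = iV ∘ w2)
  (* 0'_E *)
  (z' : Hom (bE E) (bE VE)) (Hz' : iV ∘ z' = tzero t (bE E))
  (* lambda_{2,E} and lambda'_{2,E} *)
  (l2 : Hom (tTm t 2 (bE E)) (Tn (tT t) 2 (bE E))) (Hl2 : is_lambda2 t (bE E) l2)
  (l' : Hom (bE W) (bE V2E)) (Hl' : i2 ∘ l' = l2 ∘ iW)
  (* pi'^[1]_E *)
  (p1 : Hom (bE V2E) (bE VE))
  (Hp1 : iV ∘ p1 = fmap (tT t) (tpi t (bE E)) ∘ i2) :
  (* the square commutes ... *)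
  p1 ∘ l' = z' ∘ (tpi t (bE E) ∘ iV ∘ w1) /\
  (* ... is a pullback in C ... *)
  is_pullback p1 z' l' (tpi t (bE E) ∘ iV ∘ w1) /\
  (* ... and is a pullback in the category of right G-bundles and
     G-equivariant bundle morphisms *)
  (forall (X : Bundle G), bundle_axioms X ->
     forall (a : Hom (bE X) (bE E)) (b : Hom (bE X) (bE V2E)),
       equivariant X E a -> equivariant X V2E b ->
       p1 ∘ b = z' ∘ a ->
       exists! h : Hom (bE X) (bE W),
         equivariant X W h /\ l' ∘ h = b /\ (tpi t (bE E) ∘ iV ∘ w1) ∘ h = a).
Proof.
  pose proof (Tpi_Tz0 Ht) as TpiTz0.
  destruct (actT HG HGd HE HEd (n:=1) ltac:(lia)) as [Tex1 Tun1].
  destruct (actT HG HGd HE HEd (n:=2) ltac:(lia)) as [Tex2 Tun2].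
  destruct HVE as [PV [AV IV]]. destruct HV2E as [PV2 [AV2 IV2]].
  cbn [Tn Tn_map zn] in *.
  rewrite comp_id_r in PV, PV2, IV, IV2.
  destruct HE as [AE _]. unfold act_pullback in *.
  assert (brVE : br VE = br E ∘ (tpi t (bE E) ∘ iV)).
  { destruct PV as [PVc _].
    rewrite <- (comp_id_l (br VE)), <- (ax_pi_z0 Ht (Gs G 0)), <- comp_assoc, <- PVc,
      comp_assoc, <- (ax_nat_pi Ht), <- comp_assoc. reflexivity. }
  assert (iVmono : forall Y (y1 y2 : Hom Y (bE VE)), iV ∘ y1 = iV ∘ y2 -> y1 = y2).
  { intros Y y1 y2 H. apply (pb_uniq PV); auto. rewrite brVE, <- !comp_assoc, H. reflexivity. }
  assert (brV2E : br V2E = tpi t (Gs G 0) ∘ (fmap (tT t) (tpi t (Gs G 0)) ∘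
            (fmap (tT t) (fmap (tT t) (br E)) ∘ i2))).
  { destruct PV2 as [PVc _]. rewrite PVc, <- !comp_assoc, TpiTz0, comp_assoc,
      (ax_pi_z0 Ht), comp_id_l. reflexivity. }
  assert (i2mono : forall Y (y1 y2 : Hom Y (bE V2E)), i2 ∘ y1 = i2 ∘ y2 -> y1 = y2).
  { intros Y y1 y2 H. apply (pb_uniq PV2); auto. rewrite brV2E, <- !comp_assoc, H. reflexivity. }
  assert (HC1 : p1 ∘ l' = z' ∘ (tpi t (bE E) ∘ iV ∘ w1)).
  { apply iVmono. rewrite (comp_assoc iV p1 l'), Hp1, <- comp_assoc, Hl', (Tpi_l2 Ht Hl2).
    rewrite HiW1, (comp_assoc iV z'), Hz', <- !comp_assoc.
    reflexivity. }
  assert (Mw : forall Y (y1 y2 : Hom Y (bE W)), l' ∘ y1 = l' ∘ y2 ->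
     (tpi t (bE E) ∘ iV ∘ w1) ∘ y1 = (tpi t (bE E) ∘ iV ∘ w1) ∘ y2 -> y1 = y2).
  { intros Y y1 y2 H1 H2.
    assert (H : iW ∘ y1 = iW ∘ y2).
    { apply (lam2_uniq Ht Hl2).
      - rewrite !comp_assoc, <- Hl', <- !comp_assoc, H1. reflexivity.
      - rewrite !(comp_assoc (tpr t 2 (bE E) 0) iW), HiW1. repeat rewrite <- comp_assoc in H2. rassoc.
        exact H2. }
    apply (pb_uniq HW); apply iVmono.
    - rewrite !comp_assoc, <- HiW1, <- !comp_assoc, H. reflexivity.
    - rewrite !comp_assoc, <- HiW2, <- !comp_assoc, H. reflexivity. }
  destruct (lam2_ex Ht (Gs G 0)) as [lG0 HlG0].
  assert (PBW : is_pullback p1 z' l' (tpi t (bE E) ∘ iV ∘ w1)).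
  { split; [exact HC1|]. intros Y a b Hab.
    assert (Hc : fmap (tT t) (tpi t (bE E)) ∘ (i2 ∘ a) = tzero t (bE E) ∘ b).
    { rewrite comp_assoc, <- Hp1, <- comp_assoc, Hab, comp_assoc, Hz'. reflexivity. }
    destruct (lam2_pb Ht Hl2 Hc) as [e [E1 E2]].
    destruct (pair2_ex Ht (X:=Gs G 0) (a := fmap (tT t) (br E) ∘ (tpr t 2 (bE E) 0 ∘ e))
                (b := fmap (tT t) (br E) ∘ (tpr t 2 (bE E) 1 ∘ e))) as [e' [E'0 E'1]].
    { rewrite !comp_assoc, <- !(ax_nat_pi Ht), <- !comp_assoc, (pr01 Ht). reflexivity. }
    assert (HL : lG0 ∘ e' = fmap (tT t) (tzero t (Gs G 0)) ∘ (tzero t (Gs G 0) ∘ (br V2E ∘ a))).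
    { rewrite <- (lam2_nat Ht Hl2 HlG0 E'0 E'1), E1, comp_assoc.
      destruct PV2 as [PVc _]. rewrite PVc, <- !comp_assoc. reflexivity. }
    assert (Hrho : br E ∘ b = br V2E ∘ a).
    { assert (Z : tzero t (Gs G 0) ∘ (br E ∘ b) = tzero t (Gs G 0) ∘ (br V2E ∘ a)).
      { rewrite <- (TpiTz0 _ _ (tzero t (Gs G 0) ∘ (br V2E ∘ a))), <- HL, (Tpi_l2 Ht HlG0), E'0.
        rewrite (comp_assoc (tpi t (Gs G 0))), <- (ax_nat_pi Ht), <- comp_assoc, E2.
        reflexivity. }
      rewrite <- (comp_id_l (br E ∘ b)), <- (comp_id_l (br V2E ∘ a)), <- (ax_pi_z0 Ht (Gs G 0)),
        <- !comp_assoc, Z. reflexivity. }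
    destruct (pair2_ex Ht (X:=Gs G 0) (a := tzero t (Gs G 0) ∘ (br V2E ∘ a))
                (b := tzero t (Gs G 0) ∘ (br V2E ∘ a))) as [z2 [Z0 Z1]]; [reflexivity|].
    assert (Ee : e' = z2).
    { apply (lam2_uniq Ht HlG0).
      - rewrite HL. symmetry. apply (lam2_zero Ht HlG0); assumption.
      - rewrite E'0, Z0, (comp_assoc (tpi t (Gs G 0))), <- (ax_nat_pi Ht), <- comp_assoc, E2,
          comp_assoc, (ax_pi_z0 Ht), comp_id_l. exact Hrho. }
    subst e'.
    destruct (pb_ex PV _ (tpr t 2 (bE E) 0 ∘ e) (br V2E ∘ a)) as [v1 [V1 _]].
    { rewrite <- E'0. exact Z0. }
    destruct (pb_ex PV _ (tpr t 2 (bE E) 1 ∘ e) (br V2E ∘ a)) as [v2 [V2 _]].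
    { rewrite <- E'1. exact Z1. }
    destruct (pb_ex HW _ v1 v2) as [hh [H1 H2]].
    { rassoc. rewrite V1, V2. apply (pr01 Ht). }
    assert (HiWh : iW ∘ hh = e).
    { apply (pair2_uniq Ht).
      - rewrite comp_assoc, HiW1, <- comp_assoc, H1, V1. reflexivity.
      - rewrite comp_assoc, HiW2, <- comp_assoc, H2, V2. reflexivity. }
    assert (F1 : l' ∘ hh = a).
    { apply i2mono. rewrite comp_assoc, Hl', <- comp_assoc, HiWh, E1. reflexivity. }
    assert (F2 : (tpi t (bE E) ∘ iV ∘ w1) ∘ hh = b).
    { rassoc. rewrite H1, V1. exact E2. }
    exists hh. split; [split; assumption|].
    intros y [Y1 Y2]. apply Mw; congruence. }
  split; [exact HC1|]. split; [exact PBW|].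
  intros X HX a b Ha Hb Hab.
  destruct HX as [AX _]. unfold act_pullback in AX.
  destruct (pb_ex PBW _ b a Hab) as [hh [F1 F2]].
  exists hh. split.
  2:{ intros y [_ [Y1 Y2]]. apply Mw; congruence. }
  split; [|split; assumption].
  destruct Ha as [Ha1 Ha2]. destruct Hb as [Hb1 Hb2].
  assert (F2p : forall Z (x : Hom Z (bE X)),
    tpi t (bE E) ∘ (iV ∘ (w1 ∘ (hh ∘ x))) = a ∘ x).
  { intros Z x. rewrite <- F2. rassoc. reflexivity. }
  assert (HWc : tpi t (bE E) ∘ (iV ∘ w1) = tpi t (bE E) ∘ (iV ∘ w2)).
  { destruct HW as [Hc _]. rassoc. repeat rewrite <- comp_assoc in Hc. exact Hc. }
  assert (HWcp : forall Z (x : Hom Z (bE W)),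
    tpi t (bE E) ∘ (iV ∘ (w1 ∘ x)) = tpi t (bE E) ∘ (iV ∘ (w2 ∘ x))).
  { intros. rewrite (comp_assoc iV w1), (comp_assoc (tpi t (bE E)) (iV ∘ w1)), HWc.
    rassoc. reflexivity. }
  split.
  { rewrite HWr, brVE. rassoc. rewrite <- (comp_id_r hh), F2p, comp_id_r. exact Ha1. }
  intros k K1 K2.
  assert (brw : br VE ∘ w1 = br VE ∘ w2).
  { rewrite brVE. rassoc. rewrite HWc. reflexivity. }
  destruct HWa as [HWac _].
  destruct (pb_ex AV _ (w1 ∘ baE W) (baG W)) as [u1 [U1a U1b]].
  { rewrite comp_assoc, <- HWr. exact HWac. }
  destruct (pb_ex AV _ (w2 ∘ baE W) (baG W)) as [u2 [U2a U2b]].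
  { rewrite comp_assoc, <- brw, <- HWr. exact HWac. }
  destruct (HWact u1 u2 U1a U1b U2a U2b) as [A1 A2].
  destruct (Tex1 _ (iV ∘ baE VE) (tzero t (G1 G) ∘ baG VE)) as [φ [P1 P2]].
  { rewrite comp_assoc, (proj1 PV), <- comp_assoc, (proj1 AV),
      (comp_assoc (fmap (tT t) (gt G))), (ax_nat_z0 Ht), <- comp_assoc. reflexivity. }
  pose proof (IV φ P1 P2) as IVe.
  assert (TTz : forall (A B : C) (f : Hom A B) Z (x : Hom Z A),
     fmap (tT t) (fmap (tT t) f) ∘ (fmap (tT t) (tzero t A) ∘ (tzero t A ∘ x)) =
     fmap (tT t) (tzero t B) ∘ (tzero t B ∘ (f ∘ x))).
  { intros. rewrite comp_assoc, <- fmap_comp, (ax_nat_z0 Ht), fmap_comp, <- comp_assoc.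
    f_equal. rewrite comp_assoc, (ax_nat_z0 Ht), <- comp_assoc. reflexivity. }
  destruct (Tex2 _ (i2 ∘ baE V2E) (fmap (tT t) (tzero t (G1 G)) ∘ (tzero t (G1 G) ∘ baG V2E)))
    as [φ2 [Q1 Q2]].
  { rewrite TTz, comp_assoc, (proj1 PV2). rassoc. rewrite (proj1 AV2). reflexivity. }
  pose proof (IV2 φ2 Q1 ltac:(rewrite Q2, comp_assoc; reflexivity)) as IV2e.
  destruct (pb_ex AV2 _ (b ∘ baE X) (baG X)) as [kV [KV1 KV2]].
  { rewrite comp_assoc, Hb1. exact (proj1 AX). }
  pose proof (Hb2 kV KV1 KV2) as Hbk.
  assert (PE : forall u : Hom (bA W) (bA VE),
    baE E ∘ (tpi t (bA E) ∘ (φ ∘ (u ∘ k))) = tpi t (bE E) ∘ (iV ∘ (baE VE ∘ (u ∘ k)))).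
  { intro u. rewrite comp_assoc, (ax_nat_pi Ht). rassoc. rewrite (post P1). rassoc. reflexivity. }
  assert (PG : forall u : Hom (bA W) (bA VE),
    baG E ∘ (tpi t (bA E) ∘ (φ ∘ (u ∘ k))) = baG VE ∘ (u ∘ k)).
  { intro u. rewrite comp_assoc, (ax_nat_pi Ht). rassoc. rewrite (post P2). rassoc.
    rewrite comp_assoc, (ax_pi_z0 Ht), comp_id_l. reflexivity. }
  assert (Ma1 : baE E ∘ (tpi t (bA E) ∘ (φ ∘ (u1 ∘ k))) = a ∘ baE X).
  { rewrite PE, (post U1a). rassoc. rewrite K1. apply F2p. }
  assert (Ma2 : baG E ∘ (tpi t (bA E) ∘ (φ ∘ (u1 ∘ k))) = baG X).
  { rewrite PG, (post U1b). exact K2. }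
  pose proof (Ha2 _ Ma1 Ma2) as Hak.
  destruct (lam2_ex Ht (bA E)) as [lA HlA].
  destruct (lam2_ex Ht (G1 G)) as [lG1 HlG1].
  assert (HL'p : forall Z (x : Hom Z (bE W)), l2 ∘ (iW ∘ x) = i2 ∘ (l' ∘ x)).
  { intros. rewrite comp_assoc, <- Hl', <- comp_assoc. reflexivity. }
  apply Mw.
  - apply i2mono.
    rewrite (comp_assoc l' hh), F1, Hbk, (post IV2e), (post Hl'). rassoc.
    destruct (pair2_ex Ht (X := bA E) (a := φ ∘ (u1 ∘ k)) (b := φ ∘ (u2 ∘ k))) as [P [P0 P1']].
    { apply (pb_uniq AE).
      - rewrite !PE, (post U1a), (post U2a). rassoc. rewrite HWcp. reflexivity.
      - rewrite !PG, (post U1b), (post U2b). reflexivity. }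
    rewrite <- (lam2_nat Ht (f := bact E) HlA Hl2 (e := P) (e' := iW ∘ (bact W ∘ k))).
    2:{ rewrite (post HiW1). rassoc. rewrite (post A1). rassoc. rewrite (post IVe), P0. rassoc. reflexivity. }
    2:{ rewrite (post HiW2). rassoc. rewrite (post A2). rassoc. rewrite (post IVe), P1'. rassoc. reflexivity. }
    f_equal. apply Tun2.
    + rewrite (post Q1). rassoc. rewrite KV1.
      rewrite (lam2_nat Ht (f := baE E) HlA Hl2 (e := P) (e' := iW ∘ (baE W ∘ k))).
      * rewrite K1, HL'p, (comp_assoc l' hh), F1. reflexivity.
      * rewrite (post HiW1). rassoc. rewrite P0, (post P1). rassoc. rewrite (post U1a). rassoc. reflexivity.
      * rewrite (post HiW2). rassoc. rewrite P1', (post P1). rassoc. rewrite (post U2a). rassoc. reflexivity.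
    + rewrite (post Q2). rassoc. rewrite KV2.
      destruct (pair2_ex Ht (X := G1 G) (a := tzero t (G1 G) ∘ baG X) (b := tzero t (G1 G) ∘ baG X))
        as [z2 [Z0 Z1]]; [reflexivity|].
      rewrite (lam2_nat Ht (f := baG E) HlA HlG1 (e := P) (e' := z2)).
      * symmetry. apply (lam2_zero Ht HlG1); assumption.
      * rewrite Z0, P0, (post P2). rassoc. rewrite (post U1b), K2. reflexivity.
      * rewrite Z1, P1', (post P2). rassoc. rewrite (post U2b), K2. reflexivity.
  - rassoc. rewrite F2p, Hak, (post A1). rassoc. rewrite (post IVe).
    rassoc. rewrite (comp_assoc (tpi t (bE E))), <- (ax_nat_pi Ht). rassoc. reflexivity.
Qed.
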